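(* For every $1\le j\le m+n$, as operators on $\widetilde T(\mathbb V)$, $$L(e_j)L(e_j^\ast)=\frac{K_j-K_j^{-1}}{q_j-q_j^{-1}}.$$
   Context: $q$ is an indeterminate, $m,n\ge1$, $[m+n]=\{1,\dots,m+n\}$. The Hecke algebra $\mathscr H_d$ is the $\mathbb C(q)$-algebra generated by $T_1,\dots,T_{d-1}$ with relations $(T_i-q)(T_i+q^{-1})=0$, $T_iT_{i+1}T_i=T_{i+1}T_iT_{i+1}$, $T_iT_j=T_jT_i$ ($|i-j|>1$); $T_w=T_{i_1}\cdots T_{i_k}$ for a reduced expression $w=s_{i_1}\cdots s_{i_k}\in\mathfrak S_d$; $\mathscr H_\infty$ is the inductive limit of $\mathscr H_0\subset\mathscr H_1\subset\cdots$, and $T\mapsto T^{\uparrow k}$ is the algebra endomorphism with $T_i^{\uparrow k}=T_{i+k}$. Parity: $\hat i=0$ if $i\le m$, $\hat i=1$ if $i>m$; $q_i=q^{(-1)^{\hat i}}$. $\gamma(i,j)=1$ if $i>j$ and $-1$ if $i\le j$. $\mathbb V$ is the $\mathbb C(q)$-vector space with basis $e_1,\dots,e_{m+n}$, $e_i$ of parity $\hat i$; $e_1^\ast,\dots,e_{m+n}^\ast$ is the dual basis. For $I=(i_d,\dots,i_1)\in[m+n]^d$, $e_I=e_{i_d}\otimes\cdots\otimes e_{i_1}$, written $e_{i_d}\cdots e_{i_1}$; $I.s_k$ is $I$ with the entries $i_k,i_{k+1}$ swapped. The right $\mathscr H_d$-action on $\mathbb V^{\otimes d}$: $e_I.T_k=(-1)^{\hat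 i_k\hat i_{k+1}}e_{I.s_k}$ if $i_k>i_{k+1}$; $=(-1)^{\hat i_k}q_{i_k}e_I$ if $i_k=i_{k+1}$; $=(-1)^{\hat i_k\hat i_{k+1}}e_{I.s_k}+(q-q^{-1})e_I$ if $i_k<i_{k+1}$. Set $\widetilde T_d(\mathbb V)=\mathbb V^{\otimes d}\otimes_{\mathscr H_d}\mathscr H_\infty$, $\widetilde T(\mathbb V)=\bigoplus_{d\ge0}\widetilde T_d(\mathbb V)$, with product $(e_{j_k}\cdots e_{j_1}\otimes T_\tau)\cdot(e_{i_d}\cdots e_{i_1}\otimes T_\sigma)=e_{j_k}\cdots e_{j_1}e_{i_d}\cdots e_{i_1}\otimes T_\tau^{\uparrow d}T_\sigma$. For $\varphi\in\widetilde T(\mathbb V)$, $L(\varphi)$ is left multiplication by $\varphi$; $L(e_i)$ uses $e_i\otimes1\in\widetilde T_1(\mathbb V)$. For $j\in[m+n]$, $f_j(e_r)=q_j^{-\delta_{jr}}e_r$ and $g_j(e_r)=e_r\otimes T_1^{-\gamma(j,r)}\in\widetilde T_1(\mathbb V)$, and $L(e_j^\ast)=0$ on $\widetilde T_0(\mathbb V)$, $$L(e_j^\ast)(e_{i_d}\cdots e_{i_1}\otimes T_\sigma)=\sum_{k=1}^d(-1)^{\hat j(\hat i_d+\cdots+\hat i_{k+1})}\langle e_j^\ast,e_{i_k}\rangle\,g_j(e_{i_d})\cdots g_j(e_{i_{k+1}})f_j(e_{i_{k-1}})\cdots f_j(e_{i_1})\cdot T_\sigma$$ (product in $\widetilde T(\mathbb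 V)$). The operator $K_j$ ($j\in[m+n]$) on $\widetilde T(\mathbb V)$ acts by $K_j(e_I\otimes T)=q_j^{\#\{r:\,i_r=j\}}\,e_I\otimes T$. *)

(* Defs.v *)
From HB Require Import structures.
From mathcomp Require Import all_boot all_algebra.
From mathcomp Require Import fraction.
From mathcomp.real_closed Require Import complex.
From mathcomp Require Import Rstruct.
From mathcomp Require Import finmap monalg.

Set Implicit Arguments.
Unset Strict Implicit.
Unset Printing Implicit Defensive.

Import GRing.Theory.
Local Open Scope ring_scope.

Notation Cq := {fraction {poly (Rdefinitions.R)[i]}}.
Definition qq : Cq := FracField.tofrac 'X.

Section SuperTensor.
Variables m n : nat.

(* Indices.  An index i of [m+n] = {1,...,m+n} is encoded by the      *)
(* ordinal i-1 : 'I_(m+n); so the paper's index i corresponds to the  *)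
(* value (val i).+1.  Comparisons are unaffected by this shift.        *)
Notation idx := 'I_(m + n).

(* parity \hat i (on the 0-based value v = i-1): 0 if i <= m, 1 else *)
Definition parn (v : nat) : nat := (m <= v)%N.
Definition qin (v : nat) : Cq := if (m <= v)%N then qq^-1 else qq.

(* Basis of the free module underlying \tilde T(V):                    *)
(*  pairs (I, w) where                                                 *)
(*   I = [:: i_d; ...; i_1] : seq idx  is the tensor e_{i_d}...e_{i_1} *)
(*       (listed in the written order, so i_k is at list position d-k) *)
(*   w : seq nat is a word in the Hecke generators of H_infty, the     *)
(*       letter a standing for the generator T_{a+1}; the word         *)
(*       [:: a_1; ...; a_l] stands for T_{a_1+1} ... T_{a_l+1}.        *)
(* The basis element (I, w) represents e_I (x) T_w in                  *)
(*  \tilde T(V) = \bigoplus_d V^{(x)d} (x)_{H_d} H_infty.              *)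
Definition Bas := (seq idx * seq nat)%type.
Definition FM := {malg Cq[Bas]}.
Definition bas (b : Bas) : FM := << b >>.

Definition lext (f : Bas -> FM) (x : FM) : FM :=
  \sum_(b <- msupp x) x@_b *: f b.

(* 0-based value of the entry i_k of I (1 <= k <= size I) *)
Definition ent (I : seq idx) (k : nat) : nat :=
  nth 0%N (map val I) (size I - k).

Definition rem_at (I : seq idx) (k : nat) : seq idx :=
  take (size I - k) I ++ drop (size I - k).+1 I.

(* Right action of T_k (1 <= k < size I) on e_I, tensored with the     *)
(* word w:  (e_I . T_k) (x) T_w.                                       *)
Definition actT (k : nat) (I : seq idx) (w : seq nat) : FM :=
  let p := (size I - k.+1)%N in
  match drop p I with
  | a :: b :: rest =>
      (* a = i_{k+1}, b = i_k *)
      let sw := bas (take p I ++ b :: a :: rest, w) in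
      let sg : Cq := (-1) ^+ (parn b * parn a) in
      if (a < b)%N then sg *: sw
      else if b == a then ((-1) ^+ parn b * qin b) *: bas (I, w)
      else sg *: sw + (qq - qq^-1) *: bas (I, w)
  | _ => 0
  end.

(* The subspace of relations: the kernel of the projection of the free *)
(* module onto \tilde T(V).  It is spanned by                          *)
(*  - the Hecke relations of H_infty (two-sided: arbitrary words u, v   *)
(*    around them),                                                     *)
(*  - the balancing relations  e_I (x) T_k h = (e_I . T_k) (x) h,       *)
(*    1 <= k <= d-1, of the tensor product over H_d.                    *)
Inductive Rel : FM -> Prop :=
| Rel_quad (I : seq idx) (u v : seq nat) (a : nat) :
    (* (T - q)(T + q^{-1}) = T^2 - (q - q^{-1}) T - 1 *)
    Rel (bas (I, u ++ a :: a :: v) - (qq - qq^-1) *: bas (I, u ++ a :: v)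
         - bas (I, u ++ v))
| Rel_braid (I : seq idx) (u v : seq nat) (a : nat) :
    Rel (bas (I, u ++ [:: a; a.+1; a] ++ v)
         - bas (I, u ++ [:: a.+1; a; a.+1] ++ v))
| Rel_comm (I : seq idx) (u v : seq nat) (a b : nat) :
    (a.+1 < b)%N ->
    Rel (bas (I, u ++ [:: a; b] ++ v) - bas (I, u ++ [:: b; a] ++ v))
| Rel_bal (I : seq idx) (w : seq nat) (a : nat) :
    (a.+2 <= size I)%N ->
    Rel (bas (I, a :: w) - actT a.+1 I w)
| Rel0 : Rel 0
| RelD (x y : FM) : Rel x -> Rel y -> Rel (x + y)
| RelZ (c : Cq) (x : FM) : Rel x -> Rel (c *: x).

Definition Teq (x y : FM) : Prop := Rel (x - y).

(* L(e_j): left multiplication by e_j (x) 1 \in \tilde T_1(V):         *)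
Definition Le (j : idx) : FM -> FM :=
  lext (fun b => bas (j :: b.1, b.2)).

(* left multiplication by T_{a+1} (pos = true) or T_{a+1}^{-1}         *)
(* (pos = false) on the Hecke part;  T^{-1} = T - (q - q^{-1}).         *)
Definition prep (a : nat) (pos : bool) : FM -> FM :=
  lext (fun b => if pos then bas (b.1, a :: b.2)
                 else bas (b.1, a :: b.2) - (qq - qq^-1) *: bas b).

(* L(e_j^star) on a basis element, following the defining formula:        *)
(*  sum_k (-1)^{\hat j (\hat i_d + ... + \hat i_{k+1})} <e_j^star, e_{i_k}> *)
(*     g_j(e_{i_d}) ... g_j(e_{i_{k+1}}) f_j(e_{i_{k-1}}) ... f_j(e_{i_1}) *)
(*     . T_w ,                                                          *)
(* where the product in \tilde T(V) evaluates to                        *)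
(*  (prod_{r<k} q_j^{-delta_{j,i_r}})                                   *)
(*    e_{i_d}..^e_{i_k}..e_{i_1} (x) T_{d-1}^{e_d} ... T_k^{e_{k+1}} T_w *)
(* with e_r = -gamma(j, i_r), i.e. e_r = +1 iff j <= i_r.               *)
(* (T_{r-1} is the letter r-2.)                                         *)
Definition Lstar_bas (j : idx) (b : Bas) : FM :=
  let I := b.1 in let w := b.2 in let d := size I in
  \sum_(1 <= k < d.+1)
    if ent I k == val j then
      ((-1) ^+ (parn j * \sum_(k.+1 <= r < d.+1) parn (ent I r))
       * \prod_(1 <= r < k) (if ent I r == val j then (qin j)^-1 else 1))
      *: foldl (fun x r => prep (r - 2) (val j <= ent I r)%N x)
               (bas (rem_at I k, w)) (iota k.+1 (d - k))
    else 0.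

Definition Lstar (j : idx) : FM -> FM := lext (Lstar_bas j).

Definition Kop (j : idx) : FM -> FM :=
  lext (fun b => (qin j) ^+ (count_mem j b.1) *: bas b).
Definition Kinv (j : idx) : FM -> FM :=
  lext (fun b => (qin j) ^- (count_mem j b.1) *: bas b).

End SuperTensor.

(* Main.v *)
Require Import Defs.
From HB Require Import structures.
From mathcomp Require Import all_boot all_algebra.
From mathcomp Require Import fraction.
From mathcomp.real_closed Require Import complex.
From mathcomp Require Import Rstruct.
From mathcomp Require Import finmap monalg.
From mathcomp Require Import zify ring.
Import GRing.Theory.
Local Open Scope ring_scope.
Set Implicit Arguments.
Unset Strict Implicit.

Section Aux.
Variables m n : nat.
Notation FM := (FM m n).
Notation Bas := (Bas m n).
Implicit Types (x y z : FM) (f g : Bas -> FM).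

Lemma lextEw f x (d : {fset Bas}) : (msupp x `<=` d)%fset ->
  lext f x = \sum_(b <- d) x@_b *: f b.
Proof.
move=> le; rewrite /lext (big_fset_incl _ le) //= => b _ /mcoeff_outdom ->.
by rewrite scale0r.
Qed.

Lemma lextD f x y : lext f (x + y) = lext f x + lext f y.
Proof.
rewrite (@lextEw f (x + y) (msupp x `|` msupp y)%fset) ?msuppD_le //.
rewrite (@lextEw f x (msupp x `|` msupp y)%fset) ?fsubsetUl //.
rewrite (@lextEw f y (msupp x `|` msupp y)%fset) ?fsubsetUr //.
by rewrite -big_split /=; apply: eq_bigr => b _; rewrite mcoeffD scalerDl.
Qed.

Lemma lextZ f c x : lext f (c *: x) = c *: lext f x.
Proof.
rewrite (@lextEw f (c *: x) (msupp x)); last exact: msuppZ_le.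
rewrite /lext scaler_sumr.
by apply: eq_bigr => b _; rewrite mcoeffZ scalerA.
Qed.

Lemma lext0 f : lext f 0 = 0.
Proof. by have := lextZ f 0 0; rewrite !scale0r. Qed.

Lemma lextN f x : lext f (- x) = - lext f x.
Proof. by rewrite -scaleN1r lextZ scaleN1r. Qed.

Lemma lextB f x y : lext f (x - y) = lext f x - lext f y.
Proof. by rewrite lextD lextN. Qed.

Lemma lext_sum f (I : Type) (s : seq I) (F : I -> FM) :
  lext f (\sum_(i <- s) F i) = \sum_(i <- s) lext f (F i).
Proof.
elim: s => [|a s IH]; first by rewrite !big_nil lext0.
by rewrite !big_cons lextD IH.
Qed.

Lemma lext_bas f b : lext f (bas b) = f b.
Proof.
by rewrite /bas (@lextEw f _ [fset b]%fset) ?msuppU_le // big_seq_fset1 mcoeffUU scale1r.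
Qed.

Lemma lext_scal f c : lext (fun b => c *: f b) =1 (fun x => c *: lext f x).
Proof. by move=> x; rewrite /lext scaler_sumr; apply: eq_bigr => b _; rewrite !scalerA mulrC. Qed.

Lemma lext_ext f g : f =1 g -> lext f =1 lext g.
Proof. by move=> e x; rewrite /lext; apply: eq_bigr => b _; rewrite e. Qed.

Lemma lext_comp f g x : lext f (lext g x) = lext (fun b => lext f (g b)) x.
Proof. by rewrite {2}/lext lext_sum; apply: eq_bigr => b _; rewrite lextZ. Qed.

Lemma lext_id x : lext (@bas m n) x = x.
Proof.
rewrite {2}(monalgE x) /lext; apply: eq_bigr => b _.
by apply/malgP => k; rewrite /bas mcoeffZ !mcoeffU mulr_natr.
Qed.

Lemma RelN x : Rel x -> Rel (- x).
Proof. by move=> h; rewrite -scaleN1r; apply: RelZ. Qed.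

Lemma Teq_refl x : Teq x x.
Proof. by rewrite /Teq subrr; apply: Rel0. Qed.

Lemma Teq_sym x y : Teq x y -> Teq y x.
Proof. by rewrite /Teq => /RelN; rewrite opprB. Qed.

Lemma Teq_trans x y z : Teq x y -> Teq y z -> Teq x z.
Proof.
rewrite /Teq => h1 h2; have := RelD h1 h2.
by rewrite addrA subrK.
Qed.

Lemma TeqD x1 x2 y1 y2 : Teq x1 y1 -> Teq x2 y2 -> Teq (x1 + x2) (y1 + y2).
Proof.
rewrite /Teq => h1 h2; have := RelD h1 h2.
by rewrite opprD addrACA.
Qed.

Lemma TeqZ c x y : Teq x y -> Teq (c *: x) (c *: y).
Proof. by rewrite /Teq => /(RelZ c); rewrite scalerBr. Qed.

Lemma Teq_eq x y : x = y -> Teq x y.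
Proof. by move=> ->; apply: Teq_refl. Qed.

Lemma Teq_sum (I : Type) (s : seq I) (F G : I -> FM) :
  (forall i, Teq (F i) (G i)) -> Teq (\sum_(i <- s) F i) (\sum_(i <- s) G i).
Proof.
move=> h; elim: s => [|a s IH]; first by rewrite !big_nil; apply: Teq_refl.
by rewrite !big_cons; apply: TeqD.
Qed.

Lemma Teq_lext f g x : (forall b, Teq (f b) (g b)) -> Teq (lext f x) (lext g x).
Proof. by move=> h; apply: Teq_sum => b; apply: TeqZ. Qed.

End Aux.

Section Aux2.
Variables m n : nat.
Notation FM := (FM m n).
Notation Bas := (Bas m n).
Notation idx := 'I_(m + n).
Implicit Types (x y z : FM) (f g : Bas -> FM).

Definition relab (J : seq idx) : FM -> FM := lext (fun b => bas (J, b.2)).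

Lemma relab_bas J b : relab J (bas b) = bas (J, b.2).
Proof. by rewrite /relab lext_bas. Qed.

Lemma prep_bas a pos (b : Bas) : prep a pos (bas b) =
  if pos then bas (b.1, a :: b.2) else bas (b.1, a :: b.2) - (qq - qq^-1) *: bas b.
Proof. by rewrite /prep lext_bas. Qed.

Lemma prep_relab a pos J y : prep a pos (relab J y) = relab J (prep a pos y).
Proof.
rewrite /relab {1}/prep lext_comp [RHS]lext_comp; apply: lext_ext => b /=.
rewrite lext_bas; case: pos => /=; rewrite ?lextB ?lextZ !lext_bas //.
Qed.

Lemma Le_relab (j : idx) J y : Le j (relab J y) = relab (j :: J) y.
Proof.
by rewrite /relab /Le lext_comp; apply: lext_ext => b /=; rewrite lext_bas.
Qed.

Lemma foldl_relab (g : nat -> nat) (h : nat -> bool) rs J y :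
  foldl (fun x r => prep (g r) (h r) x) (relab J y) rs =
  relab J (foldl (fun x r => prep (g r) (h r) x) y rs).
Proof.
elim: rs y => [|r rs IH] y //=.
by rewrite prep_relab IH.
Qed.

Lemma Teq_step a pos J J' (s : Cq) y :
  (forall u, Teq (prep a pos (bas (J, u))) (s *: bas (J', u))) ->
  Teq (prep a pos (relab J y)) (s *: relab J' y).
Proof.
move=> h; rewrite /relab {1}/prep lext_comp -(lext_scal (fun b => bas (J', b.2))).
by apply: Teq_lext => b; exact: (h b.2).
Qed.

Lemma parn2 v : (parn m v * parn m v = parn m v)%N.
Proof. by rewrite /parn; case: (m <= v)%N. Qed.

End Aux2.
Lemma Teq_swap2 m n (P R : seq 'I_(m+n)) (j a : 'I_(m+n)) (l : nat) (u : seq nat) :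
  size P = (size (P ++ j :: a :: R) - l.+2)%N -> (l.+2 <= size (P ++ j :: a :: R))%N ->
  Teq (prep l (val j <= val a)%N (bas (P ++ j :: a :: R, u)))
      (((-1) ^+ (parn m a * parn m j) * (if a == j then qin m j else 1))
         *: bas (P ++ a :: j :: R, u)).
Proof.
move=> hP hl.
have hb := Rel_bal u hl.
have hact := erefl (actT l.+1 (P ++ j :: a :: R) u).
rewrite {2}/actT -hP (drop_size_cat _ (erefl _)) (take_size_cat _ (erefl _)) in hact.
rewrite prep_bas.
case: (ltngtP (val j) (val a)) => hja.
- have e1 : (nat_of_ord j < nat_of_ord a)%N = true := hja.
  rewrite e1 in hact.
  apply: (Teq_trans hb); rewrite hact.
  have -> : (a == j) = false by apply/negbTE; rewrite neq_ltn hja orbT.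
  rewrite mulr1; exact: Teq_refl.
- have e1 : (nat_of_ord j < nat_of_ord a)%N = false.
    by apply/negbTE; rewrite -leqNgt ltnW.
  have e2 : (a == j) = false by apply/negbTE; rewrite neq_ltn hja.
  rewrite e1 e2 in hact.
  apply: (@Teq_trans _ _ _ (actT l.+1 (P ++ j :: a :: R) u - (qq - qq^-1) *: bas (P ++ j :: a :: R, u))).
    by apply: TeqD => //; apply: Teq_refl.
  rewrite hact e2 mulr1 addrK; exact: Teq_refl.
- have e : a = j by apply/val_inj.
  subst a; rewrite ltnn eqxx in hact.
  apply: (Teq_trans hb); rewrite hact eqxx parn2.
  exact: Teq_refl.
Qed.

Lemma qq_neq0 : qq != 0.
Proof. by rewrite /qq tofrac_eq0 polyX_eq0. Qed.

Lemma qdiff : qq - qq^-1 != 0.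
Proof.
apply/negP => /eqP h.
have h2 : qq * qq = 1.
  by move/eqP: h; rewrite subr_eq0 => /eqP h; rewrite {2}h divff // qq_neq0.
move: h2; rewrite /qq -tofracM -tofrac1 => /eqP; rewrite tofrac_eq => /eqP h3.
have := congr1 (fun p : {poly _} => size p) h3; rewrite /= size_poly1 -expr2 size_polyXn.
by [].
Qed.

Lemma qin_diff m v : qin m v - (qin m v)^-1 != 0.
Proof.
rewrite /qin; case: ifP => _; last exact: qdiff.
by rewrite invrK -opprB oppr_eq0 qdiff.
Qed.

Lemma Teq_sum_in m n (I : eqType) (s : seq I) (F G : I -> FM m n) :
  (forall i, i \in s -> Teq (F i) (G i)) -> Teq (\sum_(i <- s) F i) (\sum_(i <- s) G i).
Proof.
elim: s => [|a s IH] h; first by rewrite !big_nil; apply: Teq_refl.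
rewrite !big_cons; apply: TeqD; first by apply: h; rewrite mem_head.
by apply: IH => i hi; apply: h; rewrite inE hi orbT.
Qed.

Section Main.
Variables m n : nat.
Variable j : 'I_(m + n).
Notation idx := 'I_(m + n).
Notation FM := (FM m n).

Definition Fj (I : seq idx) := fun (x : FM) (r : nat) => prep (r - 2) (val j <= ent I r)%N x.
Definition sig (a : idx) : Cq := (-1) ^+ (parn m a * parn m j) * (if a == j then qin m j else 1).
Definition sprod (S : seq idx) := \prod_(a <- S) sig a.

Lemma ent_nth (I : seq idx) k : (1 <= k <= size I)%N ->
  ent I k = val (nth j I (size I - k)).
Proof.
move=> /andP [h1 h2]; rewrite /ent (nth_map j) //; lia.
Qed.

Lemma Qlem (I : seq idx) k (hk1 : (1 <= k)%N) (hk2 : (k <= size I)%N)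
  (hj : ent I k = val j) nn : forall t,
  (t + nn = size I - k)%N -> forall y,
  Teq (relab (take t (take (size I - k) I) ++ j :: drop t (take (size I - k) I)
               ++ drop (size I - k).+1 I)
       (foldl (Fj I) y (iota k.+1 nn)))
      (sprod (drop t (take (size I - k) I)) *: relab I y).
Proof.
set p := (size I - k)%N.
have hp : (p < size I)%N by rewrite /p; lia.
have hnth : nth j I p = j.
  by apply/val_inj; rewrite -hj ent_nth ?hk1 ?hk2.
have hI : I = take p I ++ j :: drop p.+1 I.
  by rewrite -[in j :: _]hnth -drop_nth // cat_take_drop.
have hsA : size (take p I) = p by rewrite size_take hp.
elim: nn => [|nn IH] t ht y.
- rewrite addn0 in ht; subst t.
  rewrite take_oversize ?hsA // drop_oversize ?hsA // /= -hI.
  rewrite /sprod big_nil scale1r.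
  exact: Teq_refl.
- have htp : (t < p)%N by rewrite -ht addnS ltnS leq_addr.
  set A := take p I.
  have hsAt : (t < size A)%N by rewrite hsA.
  set a := nth j A t.
  have hdrop : drop t A = a :: drop t.+1 A by rewrite /a -drop_nth.
  have htake : take t.+1 A = rcons (take t A) a by rewrite /a -take_nth.
  rewrite /Fj in IH *.
  rewrite -[nn.+1]addn1 iotaD foldl_cat /=.
  have hent : ent I (k.+1 + nn) = val a.
    rewrite ent_nth; last by apply/andP; split; [rewrite addSn | lia].
    rewrite /a nth_take //; congr (val (nth _ _ _)); lia.
  rewrite hent -prep_relab hdrop.
  set Y := foldl _ y (iota k.+1 nn).
  apply: (@Teq_trans _ _ _ (sig a *: relab (take t.+1 A ++ j :: drop t.+1 A ++ drop p.+1 I) Y)).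
    apply: Teq_step => u.
    rewrite htake cat_rcons.
    have hsz : size (take t A ++ j :: a :: drop t.+1 A ++ drop p.+1 I) = size I.
      rewrite size_cat /= size_cat size_take hsAt !size_drop hsA; lia.
    apply: Teq_swap2.
    + rewrite hsz size_take hsAt; lia.
    + rewrite hsz; lia.
  rewrite /sprod big_cons -scalerA; apply: TeqZ.
  by apply: IH; lia.
Qed.

End Main.
Section Main2.
Variables m n : nat.
Variable j : 'I_(m + n).
Notation idx := 'I_(m + n).
Notation FM := (FM m n).
Notation q := (qin m j).

Definition coefk (I : seq idx) k : Cq :=
  (-1) ^+ (parn m j * \sum_(k.+1 <= r < (size I).+1) parn m (ent I r))
  * \prod_(1 <= r < k) (if ent I r == val j then q^-1 else 1).

Definition Gk (I : seq idx) k : Cq :=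
  if ent I k == val j then coefk I k * sprod j (take (size I - k) I) else 0.

Definition G (I : seq idx) := \sum_(1 <= k < (size I).+1) Gk I k.

Lemma main_bas (I : seq idx) w : Teq (Le j (Lstar_bas j (I, w))) (G I *: bas (I, w)).
Proof.
rewrite /Lstar_bas /G /= scaler_suml /Le lext_sum.
apply: Teq_sum_in => k; rewrite mem_index_iota => /andP [hk1 hk2].
rewrite ltnS in hk2.
rewrite /Gk; case: eqP => h; last first.
  by rewrite lext0 scale0r; apply: Teq_refl.
rewrite lextZ -scalerA; apply: TeqZ.
rewrite -(relab_bas (rem_at I k) ([::], w)).
rewrite (foldl_relab (fun r => r - 2)%N (fun r => (val j <= ent I r)%N)).
rewrite -/(Le j) Le_relab.
have := @Qlem m n j I k hk1 hk2 h (size I - k)%N 0%N (add0n _) (bas ([::], w)).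
by rewrite take0 drop0 relab_bas.
Qed.

End Main2.

Section Main3.
Variables m n : nat.
Variable j : 'I_(m + n).
Notation idx := 'I_(m + n).
Notation FM := (FM m n).
Notation q := (qin m j).

Lemma ent_cons (a : idx) (I : seq idx) r : (1 <= r <= size I)%N -> ent (a :: I) r = ent I r.
Proof.
move=> /andP [h1 h2]; rewrite /ent /=.
have -> : ((size I).+1 - r = (size I - r).+1)%N by lia.
by [].
Qed.

Lemma ent_top (a : idx) (I : seq idx) : ent (a :: I) (size I).+1 = val a.
Proof. by rewrite /ent /= subnn. Qed.

Lemma Pcount (I : seq idx) (c : Cq) :
  \prod_(1 <= r < (size I).+1) (if ent I r == val j then c else 1) = c ^+ count_mem j I.
Proof.
elim: I => [|a I IH]; first by rewrite big_geq.
rewrite big_nat_recr //= ent_top.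
rewrite (@eq_big_nat _ _ _ 1 (size I).+1 _ (fun r => if ent I r == val j then c else 1)).
  by rewrite IH val_eqE exprD mulrC; case: (a == j); rewrite ?expr1 ?expr0.
by move=> r hr; rewrite ent_cons.
Qed.

Lemma sq1 (e : nat) : (-1 : Cq) ^+ e * (-1) ^+ e = 1.
Proof. by rewrite -exprMn mulrNN mulr1 expr1n. Qed.

Lemma Gk_cons (a : idx) (I : seq idx) k : (1 <= k <= size I)%N ->
  Gk j (a :: I) k = Gk j I k * (if a == j then q else 1).
Proof.
move=> hk; have /andP [hk1 hk2] := hk.
rewrite /Gk ent_cons //; case: eqP => _; last by rewrite mul0r.
rewrite /coefk /=.
have -> : ((size I).+1 - k = (size I - k).+1)%N by lia.
rewrite /= /sprod big_cons.
rewrite big_nat_recr /=; last by [].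
rewrite ent_top.
rewrite (@eq_big_nat _ _ _ k.+1 (size I).+1 _ (fun r => parn m (ent I r))); last first.
  by move=> r hr; rewrite ent_cons //; lia.
rewrite (@eq_big_nat _ _ _ 1 k _ (fun r => if ent I r == val j then q^-1 else 1)); last first.
  by move=> r hr; rewrite ent_cons //; lia.
rewrite mulnDr exprD /sig.
set s1 := (-1) ^+ _; set s2 := (-1 : Cq) ^+ (parn m j * parn m a).
set P := \prod_(_ <= _ < _ ) _; set Sp := \prod_(_ <- _) _; set X := if _ then _ else _.
have -> : (-1 : Cq) ^+ (parn m a * parn m j) = s2 by rewrite /s2 mulnC.
have hs : s2 * s2 = 1 by apply: sq1.
transitivity ((s2 * s2) * (s1 * P * Sp * X)); first by ring.
by rewrite hs mul1r; ring.
Qed.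

Lemma Gk_top (a : idx) (I : seq idx) :
  Gk j (a :: I) (size I).+1 = if a == j then q^-1 ^+ count_mem j I else 0.
Proof.
rewrite /Gk ent_top val_eqE; case: (a == j) => //.
rewrite /coefk /= big_geq // muln0 expr0 mul1r subnn take0 /sprod big_nil mulr1.
rewrite (@eq_big_nat _ _ _ 1 (size I).+1 _ (fun r => if ent I r == val j then q^-1 else 1)).
  by rewrite Pcount.
by move=> r hr; rewrite ent_cons.
Qed.

Lemma G_eq (I : seq idx) :
  G j I * (q - q^-1) = q ^+ count_mem j I - (q ^+ count_mem j I)^-1.
Proof.
elim: I => [|a I IH].
  by rewrite /G big_geq // mul0r /= expr0 invr1 subrr.
rewrite /G big_nat_recr //= Gk_top.
rewrite (@eq_big_nat _ _ _ 1 (size I).+1 _ (fun k => Gk j I k * (if a == j then q else 1))); last first.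
  by move=> k hk; rewrite Gk_cons.
rewrite -mulr_suml -/(G j I).
case: (a == j); last by rewrite mulr1 addr0 add0n.
rewrite add1n exprS invfM exprVn.
set Q := q ^+ _.
transitivity (q * (G j I * (q - q^-1)) + Q^-1 * (q - q^-1)); first by ring.
rewrite IH -/Q !mulrBr addrA [Q^-1 * q]mulrC subrK [Q^-1 * _]mulrC.
reflexivity.
Qed.

End Main3.

Theorem lemma6p2 (m n : nat) (hm : (1 <= m)%N) (hn : (1 <= n)%N)
    (j : 'I_(m + n)) (x : FM m n) :
  Teq (Le j (Lstar j x))
      ((qin m j - (qin m j)^-1)^-1 *: (Kop j x - Kinv j x)).
Proof.
rewrite /Lstar {1}/Le lext_comp.
have -> : Kop j x - Kinv j x =
    lext (fun b => ((qin m j) ^+ (count_mem j b.1) - (qin m j) ^- (count_mem j b.1)) *: bas b) x.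
  rewrite /Kop /Kinv /lext -sumrB; apply: eq_bigr => b _.
  by rewrite -scalerBr scalerBl.
rewrite -lext_scal; apply: Teq_lext => -[I w].
apply: (Teq_trans (main_bas j I w)); apply: Teq_eq; rewrite scalerA; congr (_ *: _).
by rewrite /= -G_eq mulrC mulfK // qin_diff.
Qed.
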